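(* Let $\kappa$ be a cardinal (finite or infinite), let $\mathbb{F}$ be a field, and let $V$ be the vector space over $\mathbb{F}$ presented by generators $x_\alpha, y_\alpha, z_\alpha$ ($\alpha\in\kappa$) subject to the relations $x_\alpha+y_\alpha+z_\alpha=0$ ($\alpha\in\kappa$). Define $F\colon \mathcal{P}(\kappa)^3\to \mathrm{Sub}(V)$ by $F(A,B,C)=\mathrm{Span}\{x_\alpha:\alpha\in A\}+\mathrm{Span}\{y_\beta:\beta\in B\}+\mathrm{Span}\{z_\gamma:\gamma\in C\}$. Then the restriction of $F$ to $M_3[\mathcal{P}(\kappa)]$ is a bounded lattice embedding $M_3[\mathcal{P}(\kappa)]\to\mathrm{Sub}(V)$. Consequently, when $\kappa$ is infinite, the restriction of $F$ to the lattice $S$ is a bounded lattice embedding $S\to \mathrm{Sub}(V)$; in particular $S$ is isomorphic to a bounded sublattice of the lattice of all subspaces of a vector space.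
   Context: $\mathcal{P}(\kappa)$ is the Boolean lattice of all subsets of $\kappa$ and $\mathrm{Sub}(V)$ is the lattice of all subspaces of $V$ (join is the sum of subspaces, meet is intersection). For a distributive lattice $L$, a triple $(a,b,c)\in L^3$ is balanced if $a\wedge b=a\wedge c=b\wedge c$; $M_3[L]$ denotes the set of balanced triples, which is a lattice with componentwise meet and with join $(a,b,c)\vee(a',b',c')=\overline{(a\vee a',b\vee b',c\vee c')}$, where for $(a,b,c)\in L^3$ one sets $\mu(a,b,c)=(a\wedge b)\vee(a\wedge c)\vee(b\wedge c)$ and $\overline{(a,b,c)}=(a\vee\mu(a,b,c),\,b\vee\mu(a,b,c),\,c\vee\mu(a,b,c))$. For infinite $\kappa$: $\mathcal{F}(\kappa)$ is the set of subsets $X\subseteq\kappa$ that are finite or have finite complement $\kappa\setminus X$ (a Boolean sublattice of $\mathcal{P}(\kappa)$); $T=\{(A,B,C)\in\mathcal{F}(\kappa)^3 : C\setminus \mu(A,B,C)\text{ is finite}\}$, where $\mu(A,B,C)=(A\cap B)\cup(A\cap C)\cup(B\cap C)$; and $S=T\cap M_3[\mathcal{F}(\kappa)]$, ordered componentwise (a bounded sublattice of $M_3[\mathcal{F}(\kappa)]$, itself a sublattice of $M_3[\mathcal{P}(\kappa)]$). *)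

(* Defs.v *)
From HB Require Import structures.
From mathcomp Require Import all_boot all_order all_algebra.
From mathcomp Require Import boolp classical_sets cardinality.
Set Implicit Arguments. Unset Strict Implicit. Unset Printing Implicit Defensive.
Import GRing.Theory.
Local Open Scope ring_scope.
Local Open Scope classical_set_scope.

Section Subspaces.
Variables (F : fieldType) (V : lmodType F).

Definition subspace (U : set V) : Prop :=
  U 0 /\ (forall u v, U u -> U v -> U (u + v)) /\ (forall (a : F) u, U u -> U (a *: u)).

Definition span (S : set V) : set V :=
  [set v | forall U : set V, subspace U -> S `<=` U -> U v].

Definition ssum (U W : set V) : set V :=
  [set v | exists u w, U u /\ W w /\ v = u + w].
End Subspaces.

(* (V, x, y, z) is the F-vector space presented by generators x_a, y_a, z_a
   (a in K) subject to the relations x_a + y_a + z_a = 0: the generators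
   satisfy the relations, span V, and the universal property holds. *)
Definition presentation (K : Type) (F : fieldType) (V : lmodType F)
    (x y z : K -> V) : Prop :=
  (forall a, x a + y a + z a = 0) /\
  span (range x `|` range y `|` range z) = setT /\
  (forall (W : lmodType F) (x' y' z' : K -> W),
      (forall a, x' a + y' a + z' a = 0) ->
      exists f : V -> W,
        (forall u v, f (u + v) = f u + f v) /\
        (forall (c : F) u, f (c *: u) = c *: f u) /\
        (forall a, f (x a) = x' a /\ f (y a) = y' a /\ f (z a) = z' a)).

Section Triples.
Variable K : Type.

Definition triple := (set K * set K * set K)%type.
Definition tA (t : triple) : set K := t.1.1.
Definition tB (t : triple) : set K := t.1.2.
Definition tC (t : triple) : set K := t.2.

Definition mu (A B C : set K) : set K := (A `&` B) `|` (A `&` C) `|` (B `&` C).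

(* balanced triples: elements of M_3[P(K)] *)
Definition balanced (t : triple) : Prop :=
  tA t `&` tB t = tA t `&` tC t /\ tA t `&` tC t = tB t `&` tC t.

Definition tbot : triple := (set0, set0, set0).
Definition ttop : triple := (setT, setT, setT).

Definition tmeet (t s : triple) : triple :=
  (tA t `&` tA s, tB t `&` tB s, tC t `&` tC s).

Definition closure (t : triple) : triple :=
  let m := mu (tA t) (tB t) (tC t) in (tA t `|` m, tB t `|` m, tC t `|` m).

Definition tjoin (t s : triple) : triple :=
  closure (tA t `|` tA s, tB t `|` tB s, tC t `|` tC s).

Definition fincofin (X : set K) : Prop := finite_set X \/ finite_set (~` X).

(* membership in S = T ∩ M_3[F(K)] *)
Definition inS (t : triple) : Prop :=
  fincofin (tA t) /\ fincofin (tB t) /\ fincofin (tC t) /\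
  finite_set (tC t `\` mu (tA t) (tB t) (tC t)) /\ balanced t.
End Triples.

Definition Fmap (K : Type) (F : fieldType) (V : lmodType F) (x y z : K -> V)
    (t : triple K) : set V :=
  ssum (ssum (span (x @` tA t)) (span (y @` tB t))) (span (z @` tC t)).

Definition bounded_embedding_on (K : Type) (F : fieldType) (V : lmodType F)
    (P : triple K -> Prop) (f : triple K -> set V) : Prop :=
  f (tbot K) = [set 0] /\ f (ttop K) = setT /\
  (forall t s, P t -> P s -> f t = f s -> t = s) /\
  (forall t s, P t -> P s ->
     f (tmeet t s) = f t `&` f s /\ f (tjoin t s) = ssum (f t) (f s)).

(* Main.v *)
Require Import Defs.
From HB Require Import structures.
From mathcomp Require Import all_boot all_order all_algebra.
From mathcomp Require Import boolp classical_sets cardinality.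
From Stdlib Require List.
Set Implicit Arguments. Unset Strict Implicit. Unset Printing Implicit Defensive.
Import GRing.Theory.
Local Open Scope ring_scope.
Local Open Scope classical_set_scope.

Section Sub.
Variables (F : fieldType) (V : lmodType F).

Lemma span_sub (S : set V) : S `<=` Defs.span S.
Proof. by move=> v Sv U _; apply. Qed.

Lemma span_min (S U : set V) : subspace U -> S `<=` U -> Defs.span S `<=` U.
Proof. by move=> sU SU v; apply. Qed.

Lemma subspace_span (S : set V) : subspace (Defs.span S).
Proof.
split; first by move=> U [].
split; first by move=> u v Hu Hv U sU SU; case: (sU) => _ [Hadd _]; apply: Hadd; [apply: Hu|apply: Hv].
by move=> a u Hu U sU SU; case: (sU) => _ [_ Hs]; apply: Hs; apply: Hu.
Qed.

Lemma span_mono (S T : set V) : S `<=` T -> Defs.span S `<=` Defs.span T.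
Proof. move=> ST; apply: span_min; first exact: subspace_span.
by move=> v /ST; apply: span_sub. Qed.

Lemma subspaceN (U : set V) u : subspace U -> U u -> U (- u).
Proof. by case=> _ [_ Hs] Hu; rewrite -scaleN1r; apply: Hs. Qed.

Lemma subspace_ssum (U W : set V) : subspace U -> subspace W -> subspace (ssum U W).
Proof.
move=> [U0 [Ua Us]] [W0 [Wa Ws]]; split; first by exists 0, 0; rewrite addr0.
split.
  move=> _ _ [u1 [w1 [H1 [H2 ->]]]] [u2 [w2 [H3 [H4 ->]]]].
  exists (u1 + u2), (w1 + w2); split; [exact: Ua|split; [exact: Wa|]].
  by rewrite addrACA.
move=> a _ [u1 [w1 [H1 [H2 ->]]]]; exists (a *: u1), (a *: w1).
by split; [exact: Us|split; [exact: Ws|rewrite scalerDr]].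
Qed.

Lemma ssum_min (U W X : set V) : subspace X -> U `<=` X -> W `<=` X -> ssum U W `<=` X.
Proof. by move=> [_ [Xa _]] UX WX _ [u [w [Hu [Hw ->]]]]; apply: Xa; [apply: UX|apply: WX]. Qed.

Lemma ssum_l (U W : set V) : subspace W -> U `<=` ssum U W.
Proof. by move=> [W0 _] u Hu; exists u, 0; rewrite addr0. Qed.

Lemma ssum_r (U W : set V) : subspace U -> W `<=` ssum U W.
Proof. by move=> [U0 _] w Hw; exists 0, w; rewrite add0r. Qed.

Lemma ssum_mono (U W U' W' : set V) : U `<=` U' -> W `<=` W' -> ssum U W `<=` ssum U' W'.
Proof. by move=> H1 H2 _ [u [w [Hu [Hw ->]]]]; exists u, w; split; [apply: H1|split; [apply: H2|]]. Qed.

Definition lin (W : lmodType F) (f : V -> W) :=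
  (forall u v, f (u + v) = f u + f v) /\ (forall (c : F) u, f (c *: u) = c *: f u).

Lemma subspace_preim (W : lmodType F) (f : V -> W) (U : set W) :
  lin f -> subspace U -> subspace (f @^-1` U).
Proof.
move=> [fa fs] [U0 [Ua Us]]; split.
  by rewrite /preimage /= -(scale0r 0) fs scale0r.
split; first by move=> u v Hu Hv; rewrite /preimage /= fa; apply: Ua.
by move=> a u Hu; rewrite /preimage /= fs; apply: Us.
Qed.

Lemma subspace0 (W : lmodType F) : subspace [set (0 : W)].
Proof. split=> //; split; first by move=> u v -> ->; rewrite addr0.
by move=> a u ->; rewrite scaler0. Qed.

End Sub.
Section Main.
Variables (K : Type) (F : fieldType) (V : lmodType F) (x y z : K -> V).
Hypothesis Hrel : forall a, x a + y a + z a = 0.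
Hypothesis Hspan : Defs.span (range x `|` range y `|` range z) = setT.

Local Notation Fm := (Fmap x y z).

Lemma Fmap_sub t : subspace (Fm t).
Proof. by apply: subspace_ssum; [apply: subspace_ssum|]; apply: subspace_span. Qed.

Lemma Fmap_min (t : triple K) (U : set V) : subspace U ->
  (forall a, tA t a -> U (x a)) -> (forall a, tB t a -> U (y a)) ->
  (forall a, tC t a -> U (z a)) -> Fm t `<=` U.
Proof.
move=> sU hx hy hz; apply: ssum_min => //; last first.
  by apply: span_min => // _ [a Ha <-]; apply: hz.
apply: ssum_min => //; apply: span_min => // _ [a Ha <-]; [exact: hx|exact: hy].
Qed.

Lemma Fmap_x t a : tA t a -> Fm t (x a).
Proof.
move=> Ha; apply: ssum_l; first exact: subspace_span.
apply: ssum_l; first exact: subspace_span.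
by apply: span_sub; exists a.
Qed.

Lemma Fmap_y t a : tB t a -> Fm t (y a).
Proof.
move=> Ha; apply: ssum_l; first exact: subspace_span.
apply: ssum_r; first exact: subspace_span.
by apply: span_sub; exists a.
Qed.

Lemma Fmap_z t a : tC t a -> Fm t (z a).
Proof.
move=> Ha; apply: ssum_r; first by apply: subspace_ssum; apply: subspace_span.
by apply: span_sub; exists a.
Qed.

Lemma Fmap_mono (t s : triple K) : tA t `<=` tA s -> tB t `<=` tB s -> tC t `<=` tC s ->
  Fm t `<=` Fm s.
Proof.
move=> hA hB hC; apply: Fmap_min; first exact: Fmap_sub.
- by move=> a /hA; apply: Fmap_x.
- by move=> a /hB; apply: Fmap_y.
- by move=> a /hC; apply: Fmap_z.
Qed.

Lemma ex_x a : x a = - (y a + z a).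
Proof. by apply/eqP; rewrite -addr_eq0 addrA Hrel. Qed.
Lemma ex_y a : y a = - (x a + z a).
Proof. by apply/eqP; rewrite -addr_eq0 addrCA addrA Hrel. Qed.
Lemma ex_z a : z a = - (x a + y a).
Proof. by apply/eqP; rewrite -addr_eq0 addrC Hrel. Qed.

Lemma third (U : set V) a : subspace U ->
  (U (x a) /\ U (y a)) \/ (U (x a) /\ U (z a)) \/ (U (y a) /\ U (z a)) ->
  U (x a) /\ U (y a) /\ U (z a).
Proof.
move=> sU; have [_ [Ua _]] := sU.
case=> [[h1 h2]|[[h1 h2]|[h1 h2]]].
- by split=> //; split=> //; rewrite ex_z; apply: subspaceN => //; apply: Ua.
- by split=> //; split=> //; rewrite ex_y; apply: subspaceN => //; apply: Ua.
- by split=> //; rewrite ex_x; apply: subspaceN => //; apply: Ua.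
Qed.

Lemma lin_eq (W : lmodType F) (f g : V -> W) : lin f -> lin g ->
  (forall a, f (x a) = g (x a)) -> (forall a, f (y a) = g (y a)) ->
  (forall a, f (z a) = g (z a)) -> forall v, f v = g v.
Proof.
move=> [fa fs] [ga gs] hx hy hz v.
have lh : lin (fun v => f v - g v).
  split; first by move=> u w; rewrite fa ga addrACA opprD.
  by move=> c u; rewrite fs gs scalerBr.
have sU := subspace_preim lh (subspace0 W).
have sub : range x `|` range y `|` range z `<=` (fun v => f v - g v) @^-1` [set 0].
  by move=> _ [[[a _ <-]|[a _ <-]]|[a _ <-]]; rewrite /preimage /= ?hx ?hy ?hz subrr.
have : setT v by [].
rewrite -Hspan => /(span_min sU sub); rewrite /preimage /= => /eqP.
by rewrite subr_eq0 => /eqP.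
Qed.


Definition dl (b a : K) : F := if pselect (b = a) then 1 else 0.
Lemma dl_neq b a : b <> a -> dl b a = 0.
Proof. by rewrite /dl; case: pselect. Qed.
Lemma dl_eq a : dl a a = 1.
Proof. by rewrite /dl; case: pselect. Qed.

Variables (phx phy phz : K -> V -> F^o).
Hypothesis Hphx : forall b, lin (phx b) /\ forall a,
  phx b (x a) = 0 /\ phx b (y a) = dl b a /\ phx b (z a) = - dl b a.
Hypothesis Hphy : forall b, lin (phy b) /\ forall a,
  phy b (x a) = dl b a /\ phy b (y a) = 0 /\ phy b (z a) = - dl b a.
Hypothesis Hphz : forall b, lin (phz b) /\ forall a,
  phz b (x a) = dl b a /\ phz b (y a) = - dl b a /\ phz b (z a) = 0.

Lemma phi_id b v : phx b v + phz b v = phy b v.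
Proof.
have [[xa xs] hx] := Hphx b; have [ly hy] := Hphy b; have [[za zs] hz] := Hphz b.
apply: (lin_eq (f := fun v => phx b v + phz b v)) => //.
- split; first by move=> u w; rewrite xa za addrACA.
  by move=> c u; rewrite xs zs scalerDr.
- by move=> a; have [-> [_ _]] := hx a; have [-> [_ _]] := hz a; have [-> _] := hy a; rewrite add0r.
- by move=> a; have [_ [-> _]] := hx a; have [_ [-> _]] := hz a; have [_ [-> _]] := hy a; rewrite subrr.
- by move=> a; have [_ [_ ->]] := hx a; have [_ [_ ->]] := hz a; have [_ [_ ->]] := hy a; rewrite addr0.
Qed.

Lemma ker_sub (W : lmodType F) (f : V -> W) : lin f -> subspace (f @^-1` [set 0]).
Proof. by move=> lf; apply: subspace_preim => //; apply: subspace0. Qed.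

Definition Kt (t : triple K) (v : V) :=
  forall b, (~ tB t b /\ ~ tC t b -> phx b v = 0) /\
            (~ tA t b /\ ~ tC t b -> phy b v = 0) /\
            (~ tA t b /\ ~ tB t b -> phz b v = 0).

Lemma F_K t v : Fm t v -> Kt t v.
Proof.
move=> Hv b; split; [|split].
- move=> [nB nC]; have [lf hf] := Hphx b.
  apply: (Fmap_min (U := phx b @^-1` [set 0]) (ker_sub lf)) Hv => a Ha;
    rewrite /preimage /=; have [e1 [e2 e3]] := hf a; rewrite ?e1 ?e2 ?e3 //;
    by rewrite dl_neq ?oppr0 // => eba; subst.
- move=> [nA nC]; have [lf hf] := Hphy b.
  apply: (Fmap_min (U := phy b @^-1` [set 0]) (ker_sub lf)) Hv => a Ha;
    rewrite /preimage /=; have [e1 [e2 e3]] := hf a; rewrite ?e1 ?e2 ?e3 //;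
    by rewrite dl_neq ?oppr0 // => eba; subst.
- move=> [nA nB]; have [lf hf] := Hphz b.
  apply: (Fmap_min (U := phz b @^-1` [set 0]) (ker_sub lf)) Hv => a Ha;
    rewrite /preimage /=; have [e1 [e2 e3]] := hf a; rewrite ?e1 ?e2 ?e3 //;
    by rewrite dl_neq ?oppr0 // => eba; subst.
Qed.


Definition psi (t : triple K) (b : K) (v : V) : V :=
  if pselect (~ tA t b /\ ~ tB t b /\ ~ tC t b) then phy b v *: x b + phx b v *: y b
  else if pselect (~ tB t b /\ ~ tC t b) then phx b v *: y b
  else if pselect (~ tA t b /\ ~ tC t b) then phy b v *: x b
  else if pselect (~ tA t b /\ ~ tB t b) then phz b v *: x b
  else 0.

Lemma lin_sc (f : V -> F^o) (w : V) : lin f -> lin (fun v => f v *: w).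
Proof.
move=> [fa fs]; split; first by move=> u v; rewrite fa scalerDl.
by move=> c u; rewrite fs scalerA.
Qed.

Lemma lin_add (f g : V -> V) : lin f -> lin g -> lin (fun v => f v + g v).
Proof.
move=> [fa fs] [ga gs]; split; first by move=> u v; rewrite fa ga addrACA.
by move=> c u; rewrite fs gs scalerDr.
Qed.

Lemma lin0 : lin (fun _ : V => (0 : V)).
Proof. by split=> *; rewrite ?addr0 ?scaler0. Qed.

Lemma lin_psi t b : lin (psi t b).
Proof.
have [lx _] := Hphx b; have [ly _] := Hphy b; have [lz _] := Hphz b.
rewrite /psi; case: pselect => ?; first by apply: lin_add; apply: lin_sc.
case: pselect => ?; first exact: lin_sc.
case: pselect => ?; first exact: lin_sc.
case: pselect => ?; first exact: lin_sc.
exact: lin0.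
Qed.

Lemma psi_K t v b : Kt t v -> psi t b v = 0.
Proof.
move=> H; have [hx [hy hz]] := H b; rewrite /psi.
case: pselect => [[h1 [h2 h3]]|?]; first by rewrite hx // hy // !scale0r addr0.
case: pselect => [h|?]; first by rewrite hx // scale0r.
case: pselect => [h|?]; first by rewrite hy // scale0r.
case: pselect => [h|?]; first by rewrite hz // scale0r.
by [].
Qed.

Lemma psi_other t b v : phx b v = 0 -> phy b v = 0 -> phz b v = 0 -> psi t b v = 0.
Proof.
move=> hx hy hz; rewrite /psi hx hy hz !scale0r addr0.
by do 4! case: pselect => ? //.
Qed.

Lemma psi_x_other t b a : b <> a -> psi t b (x a) = 0.
Proof.
move=> nba; have [_ hx] := Hphx b; have [_ hy] := Hphy b; have [_ hz] := Hphz b.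
by apply: psi_other; [case: (hx a) | case: (hy a) | case: (hz a)] => -> _; rewrite ?dl_neq.
Qed.
Lemma psi_y_other t b a : b <> a -> psi t b (y a) = 0.
Proof.
move=> nba; have [_ hx] := Hphx b; have [_ hy] := Hphy b; have [_ hz] := Hphz b.
by apply: psi_other; [case: (hx a) | case: (hy a) | case: (hz a)] => _ [-> _]; rewrite ?dl_neq ?oppr0.
Qed.
Lemma psi_z_other t b a : b <> a -> psi t b (z a) = 0.
Proof.
move=> nba; have [_ hx] := Hphx b; have [_ hy] := Hphy b; have [_ hz] := Hphz b.
by apply: psi_other; [case: (hx a) | case: (hy a) | case: (hz a)] => _ [_ ->]; rewrite ?dl_neq ?oppr0.
Qed.


Lemma F0 t : Fm t 0.
Proof. by case: (Fmap_sub t). Qed.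

Lemma inx t a : tA t a \/ (tB t a /\ tC t a) -> Fm t (x a).
Proof.
case=> [h|[hb hc]]; first exact: Fmap_x.
by rewrite ex_x; apply: subspaceN; [apply: Fmap_sub|case: (Fmap_sub t) => _ [+ _]; apply; [apply: Fmap_y|apply: Fmap_z]].
Qed.
Lemma iny t a : tB t a \/ (tA t a /\ tC t a) -> Fm t (y a).
Proof.
case=> [h|[hb hc]]; first exact: Fmap_y.
by rewrite ex_y; apply: subspaceN; [apply: Fmap_sub|case: (Fmap_sub t) => _ [+ _]; apply; [apply: Fmap_x|apply: Fmap_z]].
Qed.
Lemma inz t a : tC t a \/ (tA t a /\ tB t a) -> Fm t (z a).
Proof.
case=> [h|[hb hc]]; first exact: Fmap_z.
by rewrite ex_z; apply: subspaceN; [apply: Fmap_sub|case: (Fmap_sub t) => _ [+ _]; apply; [apply: Fmap_x|apply: Fmap_y]].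
Qed.

Ltac cl3 A B C := have [?|?] := pselect A; have [?|?] := pselect B;
  have [?|?] := pselect C; tauto.
Lemma L1a (A B C : Prop) : ~(~A/\~B/\~C) -> ~B/\~C -> A \/ (B/\C).
Proof. cl3 A B C. Qed.
Lemma L1b (A B C : Prop) : ~(~A/\~B/\~C) -> ~A/\~C -> B \/ (A/\C).
Proof. cl3 A B C. Qed.
Lemma L1c (A B C : Prop) : ~(~A/\~B/\~C) -> ~A/\~B -> C \/ (A/\B).
Proof. cl3 A B C. Qed.
Lemma Lea (A B C : Prop) : ~(~B/\~C) -> ~(~A/\~C) -> ~(~A/\~B) -> A \/ (B/\C).
Proof. cl3 A B C. Qed.
Lemma Leb (A B C : Prop) : ~(~B/\~C) -> ~(~A/\~C) -> ~(~A/\~B) -> B \/ (A/\C).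
Proof. cl3 A B C. Qed.
Lemma Lec (A B C : Prop) : ~(~B/\~C) -> ~(~A/\~C) -> ~(~A/\~B) -> C \/ (A/\B).
Proof. cl3 A B C. Qed.

Lemma gen_x t a : Fm t (x a - psi t a (x a)).
Proof.
have [_ hx] := Hphx a; have [_ hy] := Hphy a; have [_ hz] := Hphz a.
have [e1 _] := hx a; have [e2 _] := hy a; have [e3 _] := hz a.
rewrite /psi e1 e2 e3 dl_eq.
case: pselect => [h|n1] /=; first by rewrite scale1r scale0r addr0 subrr; apply: F0.
case: pselect => [h|n2] /=; first by rewrite scale0r subr0; exact: inx (L1a n1 h).
case: pselect => [h|n3] /=; first by rewrite scale1r subrr; apply: F0.
case: pselect => [h|n4] /=; first by rewrite scale1r subrr; apply: F0.
by rewrite subr0; apply: inx (Lea n2 n3 n4).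
Qed.

Lemma gen_y t a : Fm t (y a - psi t a (y a)).
Proof.
have [_ hx] := Hphx a; have [_ hy] := Hphy a; have [_ hz] := Hphz a.
have [_ [e1 _]] := hx a; have [_ [e2 _]] := hy a; have [_ [e3 _]] := hz a.
rewrite /psi e1 e2 e3 dl_eq.
case: pselect => [h|n1] /=; first by rewrite scale1r scale0r add0r subrr; apply: F0.
case: pselect => [h|n2] /=; first by rewrite scale1r subrr; apply: F0.
case: pselect => [h|n3] /=; first by rewrite scale0r subr0; apply: iny (L1b n1 h).
case: pselect => [h|n4] /=.
  rewrite scaleN1r opprK addrC; have -> : x a + y a = - z a by rewrite ex_z opprK.
  apply: subspaceN; first exact: Fmap_sub.
  by apply: inz (L1c n1 h).
by rewrite subr0; apply: iny (Leb n2 n3 n4).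
Qed.

Lemma gen_z t a : Fm t (z a - psi t a (z a)).
Proof.
have [_ hx] := Hphx a; have [_ hy] := Hphy a; have [_ hz] := Hphz a.
have [_ [_ e1]] := hx a; have [_ [_ e2]] := hy a; have [_ [_ e3]] := hz a.
rewrite /psi e1 e2 e3 dl_eq.
case: pselect => [h|n1] /=.
  by rewrite !scaleN1r -opprD -ex_z subrr; apply: F0.
case: pselect => [h|n2] /=.
  rewrite scaleN1r opprK addrC; have -> : y a + z a = - x a by rewrite ex_x opprK.
  apply: subspaceN; first exact: Fmap_sub.
  by apply: inx (L1a n1 h).
case: pselect => [h|n3] /=.
  rewrite scaleN1r opprK addrC; have -> : x a + z a = - y a by rewrite ex_y opprK.
  apply: subspaceN; first exact: Fmap_sub.
  by apply: iny (L1b n1 h).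
case: pselect => [h|n4] /=; first by rewrite scale0r subr0; apply: inz (L1c n1 h).
by rewrite subr0; apply: inz (Lec n2 n3 n4).
Qed.


Definition Gs (S : seq K) : set V :=
  x @` [set b | List.In b S] `|` y @` [set b | List.In b S] `|` z @` [set b | List.In b S].

Lemma Gs_mono S T : (forall b, List.In b S -> List.In b T) -> Gs S `<=` Gs T.
Proof.
move=> ST _ [[[a Ha <-]|[a Ha <-]]|[a Ha <-]];
 [left; left|left; right|right]; exists a => //; exact: ST.
Qed.

Lemma cover v : exists S, Defs.span (Gs S) v.
Proof.
pose U := [set v | exists S, Defs.span (Gs S) v].
have sU : subspace U.
  split; first by exists nil; case: (subspace_span (Gs nil)).
  split.
    move=> u w [S1 h1] [S2 h2]; exists (S1 ++ S2).
    case: (subspace_span (Gs (S1 ++ S2))) => _ [Ha _]; apply: Ha.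
      by apply: (span_mono (Gs_mono _)) h1 => b hb; apply: List.in_or_app; left.
    by apply: (span_mono (Gs_mono _)) h2 => b hb; apply: List.in_or_app; right.
  move=> c u [S h]; exists S.
  by case: (subspace_span (Gs S)) => _ [_ Hs]; apply: Hs.
have sub : range x `|` range y `|` range z `<=` U.
  move=> _ [[[a _ <-]|[a _ <-]]|[a _ <-]]; exists [:: a]; apply: span_sub;
   [left; left|left; right|right]; exists a => //=; by left.
have : setT v by [].
by rewrite -Hspan => /(span_min sU sub).
Qed.

Lemma lin_sum (f : K -> V -> V) (S : seq K) : (forall b, lin (f b)) ->
  lin (fun v => \sum_(b <- S) f b v).
Proof.
move=> hf; elim: S => [|c S [IHa IHs]].
  by split=> *; rewrite !big_nil ?addr0 ?scaler0.
split=> *; rewrite !big_cons ?IHa ?IHs; have [fa fs] := hf c.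
  by rewrite fa addrACA.
by rewrite fs scalerDr.
Qed.

Lemma sum0_In (f : K -> V) (S : seq K) : (forall b, List.In b S -> f b = 0) ->
  \sum_(b <- S) f b = 0.
Proof.
elim: S => [|c S IH] h; first by rewrite big_nil.
rewrite big_cons h ?add0r; last by left.
by apply: IH => b hb; apply: h; right.
Qed.

Lemma sum_one (f : K -> V) (S : seq K) a : List.NoDup S -> List.In a S ->
  (forall b, b <> a -> f b = 0) -> \sum_(b <- S) f b = f a.
Proof.
elim: S => [|c S IH] // /List.NoDup_cons_iff [nc nd] /= hin h.
rewrite big_cons; have [ca|ca] := pselect (c = a).
  subst c; rewrite sum0_In ?addr0 // => b hb; apply: h => ba; subst b; exact: nc hb.
rewrite h // add0r; apply: IH => //; by case: hin.
Qed.

Lemma K_F t v : Kt t v -> Fm t v.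
Proof.
move=> Kv; have [S0 hS0] := cover v.
pose S := List.nodup (fun a b : K => pselect (a = b)) S0.
have nd : List.NoDup S by apply: List.NoDup_nodup.
have hS : Defs.span (Gs S) v.
  by apply: (span_mono (Gs_mono _)) hS0 => b hb; apply/List.nodup_In.
pose L := fun w => w - \sum_(b <- S) psi t b w.
have lL : lin L.
  have [sa ss] := lin_sum S (lin_psi t).
  split; first by move=> u w; rewrite /L sa opprD addrACA.
  by move=> c u; rewrite /L ss scalerBr.
have sU := subspace_preim lL (Fmap_sub t).
have sub : Gs S `<=` L @^-1` Fm t.
  move=> _ [[[a Ha <-]|[a Ha <-]]|[a Ha <-]]; rewrite /preimage /L /=.
  - rewrite (sum_one (a := a)) //; first exact: gen_x.
    by move=> b ba; apply: psi_x_other.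
  - rewrite (sum_one (a := a)) //; first exact: gen_y.
    by move=> b ba; apply: psi_y_other.
  - rewrite (sum_one (a := a)) //; first exact: gen_z.
    by move=> b ba; apply: psi_z_other.
have := span_min sU sub hS; rewrite /preimage /L /=.
by rewrite sum0_In ?subr0 // => b _; apply: psi_K.
Qed.


Lemma bal_pt (t : triple K) (b : K) : balanced t ->
  (tA t b /\ tB t b -> tC t b) /\ (tA t b /\ tC t b -> tB t b) /\ (tB t b /\ tC t b -> tA t b).
Proof.
move=> [e1 e2]; split; [|split].
- by move=> h; have : (tA t `&` tB t) b by []; rewrite e1 => -[].
- by move=> h; have : (tA t `&` tC t) b by []; rewrite e2 => -[].
- by move=> h; have : (tB t `&` tC t) b by []; rewrite -e2 => -[].
Qed.

Ltac cl6 At Bt Ct As Bs Cs :=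
  have [?|?] := pselect At; have [?|?] := pselect Bt; have [?|?] := pselect Ct;
  have [?|?] := pselect As; have [?|?] := pselect Bs; have [?|?] := pselect Cs.

Lemma meet_pt (At Bt Ct As Bs Cs : Prop) (px py pz : F) :
  (At/\Bt -> Ct) -> (At/\Ct -> Bt) -> (Bt/\Ct -> At) ->
  (As/\Bs -> Cs) -> (As/\Cs -> Bs) -> (Bs/\Cs -> As) ->
  (~Bt/\~Ct -> px=0) -> (~At/\~Ct -> py=0) -> (~At/\~Bt -> pz=0) ->
  (~Bs/\~Cs -> px=0) -> (~As/\~Cs -> py=0) -> (~As/\~Bs -> pz=0) ->
  px + pz = py ->
  (~(Bt/\Bs) /\ ~(Ct/\Cs) -> px = 0) /\ (~(At/\As) /\ ~(Ct/\Cs) -> py = 0) /\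
  (~(At/\As) /\ ~(Bt/\Bs) -> pz = 0).
Proof.
move=> b1 b2 b3 b4 b5 b6 hxt hyt hzt hxs hys hzs e.
have ex : px = py - pz by rewrite -e addrK.
have ez : pz = py - px by rewrite -e addrC addKr.
split; [|split] => hh; cl6 At Bt Ct As Bs Cs;
  first [ (apply: hxt; tauto) | (apply: hxs; tauto) | (apply: hyt; tauto)
        | (apply: hys; tauto) | (apply: hzt; tauto) | (apply: hzs; tauto)
        | (have h1 : py = 0 by (apply: hyt; tauto) || (apply: hys; tauto));
          (have h2 : pz = 0 by (apply: hzt; tauto) || (apply: hzs; tauto));
          by rewrite ex h1 h2 subrr
        | (have h1 : px = 0 by (apply: hxt; tauto) || (apply: hxs; tauto));
          (have h2 : pz = 0 by (apply: hzt; tauto) || (apply: hzs; tauto));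
          by rewrite -e h1 h2 addr0
        | (have h1 : py = 0 by (apply: hyt; tauto) || (apply: hys; tauto));
          (have h2 : px = 0 by (apply: hxt; tauto) || (apply: hxs; tauto));
          by rewrite ez h1 h2 subrr
        | exfalso; tauto ].
Qed.


Lemma meet_ok t s : balanced t -> balanced s -> Fm (tmeet t s) = Fm t `&` Fm s.
Proof.
move=> bt bs; apply/seteqP; split.
  move=> v h; split.
    by apply: (Fmap_mono (t := tmeet t s) (s := t)) h => a [].
  by apply: (Fmap_mono (t := tmeet t s) (s := s)) h => a [].
move=> v [Ht Hs]; apply: K_F => b.
have [xt [yt zt]] := F_K Ht b; have [xs [ys zs]] := F_K Hs b.
have [b1 [b2 b3]] := bal_pt b bt; have [b4 [b5 b6]] := bal_pt b bs.
exact: (meet_pt b1 b2 b3 b4 b5 b6 xt yt zt xs ys zs (phi_id b v)).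
Qed.

Lemma inj_pt (A B C : Prop) (px py pz : F) :
  (A/\B -> C) -> (A/\C -> B) -> (B/\C -> A) ->
  (~B/\~C -> px=0) -> (~A/\~C -> py=0) -> (~A/\~B -> pz=0) ->
  (py <> 0 /\ pz <> 0 -> A) /\ (px <> 0 /\ pz <> 0 -> B) /\ (px <> 0 /\ py <> 0 -> C).
Proof.
move=> b1 b2 b3 hx hy hz.
have [?|?] := pselect A; have [?|?] := pselect B; have [?|?] := pselect C;
  split; [|split| |split| |split| |split| |split| |split| |split| |split] => -[n1 n2];
  first [ tauto | (exfalso; apply: n1; (apply: hx || apply: hy || apply: hz); tauto)
        | (exfalso; apply: n2; (apply: hx || apply: hy || apply: hz); tauto) ].
Qed.

Lemma inj_sub t s : balanced s -> Fm t = Fm s ->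
  tA t `<=` tA s /\ tB t `<=` tB s /\ tC t `<=` tC s.
Proof.
move=> bs e.
have one : (1 : F) <> 0 by apply/eqP; apply: oner_neq0.
have mone : (- 1 : F) <> 0 by apply/eqP; rewrite oppr_eq0; apply: oner_neq0.
split; [|split] => a h.
- have : Fm s (x a) by rewrite -e; apply: Fmap_x.
  move=> /F_K /(_ a) [kx [ky kz]]; have [b1 [b2 b3]] := bal_pt a bs.
  have [e1 [_ _]] := (Hphx a).2 a; have [e2 [_ _]] := (Hphy a).2 a; have [e3 [_ _]] := (Hphz a).2 a.
  rewrite e1 e2 e3 dl_eq in kx ky kz.
  by have [+ _] := inj_pt b1 b2 b3 kx ky kz; apply; split.
- have : Fm s (y a) by rewrite -e; apply: Fmap_y.
  move=> /F_K /(_ a) [kx [ky kz]]; have [b1 [b2 b3]] := bal_pt a bs.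
  have [_ [e1 _]] := (Hphx a).2 a; have [_ [e2 _]] := (Hphy a).2 a; have [_ [e3 _]] := (Hphz a).2 a.
  rewrite e1 e2 e3 dl_eq in kx ky kz.
  by have [_ [+ _]] := inj_pt b1 b2 b3 kx ky kz; apply; split.
- have : Fm s (z a) by rewrite -e; apply: Fmap_z.
  move=> /F_K /(_ a) [kx [ky kz]]; have [b1 [b2 b3]] := bal_pt a bs.
  have [_ [_ e1]] := (Hphx a).2 a; have [_ [_ e2]] := (Hphy a).2 a; have [_ [_ e3]] := (Hphz a).2 a.
  rewrite e1 e2 e3 dl_eq in kx ky kz.
  by have [_ [_ +]] := inj_pt b1 b2 b3 kx ky kz; apply; split.
Qed.


Lemma join_ok t s : Fm (tjoin t s) = ssum (Fm t) (Fm s).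
Proof.
have sU := subspace_ssum (Fmap_sub t) (Fmap_sub s).
have inX a : tA t a \/ tA s a -> ssum (Fm t) (Fm s) (x a).
  case=> h; [apply: ssum_l; [exact: Fmap_sub|exact: Fmap_x]|apply: ssum_r; [exact: Fmap_sub|exact: Fmap_x]].
have inY a : tB t a \/ tB s a -> ssum (Fm t) (Fm s) (y a).
  case=> h; [apply: ssum_l; [exact: Fmap_sub|exact: Fmap_y]|apply: ssum_r; [exact: Fmap_sub|exact: Fmap_y]].
have inZ a : tC t a \/ tC s a -> ssum (Fm t) (Fm s) (z a).
  case=> h; [apply: ssum_l; [exact: Fmap_sub|exact: Fmap_z]|apply: ssum_r; [exact: Fmap_sub|exact: Fmap_z]].
have inM a : mu (tA t `|` tA s) (tB t `|` tB s) (tC t `|` tC s) a ->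
    ssum (Fm t) (Fm s) (x a) /\ ssum (Fm t) (Fm s) (y a) /\ ssum (Fm t) (Fm s) (z a).
  move=> hm; apply: third => //.
  case: hm => [[[h1 h2]|[h1 h2]]|[h1 h2]].
  - by left; split; [apply: inX|apply: inY].
  - by right; left; split; [apply: inX|apply: inZ].
  - by right; right; split; [apply: inY|apply: inZ].
apply/seteqP; split.
  apply: Fmap_min => // a.
  - by case=> [h|h]; [apply: inX|case: (inM a h)].
  - by case=> [h|h]; [apply: inY|case: (inM a h) => _ []].
  - by case=> [h|h]; [apply: inZ|case: (inM a h) => _ []].
apply: ssum_min; first exact: Fmap_sub.
  by apply: (Fmap_mono (t := t) (s := tjoin t s)) => a h; left; left.
by apply: (Fmap_mono (t := s) (s := tjoin t s)) => a h; left; right.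
Qed.

Lemma bot_ok : Fm (tbot K) = [set 0].
Proof.
apply/seteqP; split; last by move=> v ->; apply: F0.
by apply: Fmap_min; [exact: subspace0| move=> a []..].
Qed.

Lemma top_ok : Fm (ttop K) = setT.
Proof.
apply/seteqP; split => // v _.
have : setT v by [].
rewrite -Hspan; apply: span_min; first exact: Fmap_sub.
move=> _ [[[a _ <-]|[a _ <-]]|[a _ <-]];
  [apply: Fmap_x|apply: Fmap_y|apply: Fmap_z]; by [].
Qed.

Lemma main_bal : bounded_embedding_on (@balanced K) Fm.
Proof.
split; first exact: bot_ok.
split; first exact: top_ok.
split; last by move=> t s bt bs; split; [apply: meet_ok|apply: join_ok].
move=> [[At Bt] Ct] [[As Bs] Cs] bt bs e.
have [h1 [h2 h3]] := inj_sub bs e; have [h4 [h5 h6]] := inj_sub bt (esym e).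
have eA : At = As by apply/seteqP; split.
have eB : Bt = Bs by apply/seteqP; split.
have eC : Ct = Cs by apply/seteqP; split.
by rewrite eA eB eC.
Qed.

End Main.

Theorem theorem6p4 (K : Type) (F : fieldType) (V : lmodType F) (x y z : K -> V) :
  presentation x y z ->
  bounded_embedding_on (@balanced K) (Fmap x y z) /\
  (~ finite_set [set: K] -> bounded_embedding_on (@inS K) (Fmap x y z)).
Proof.
move=> [Hrel [Hspan Hun]].
have ex1 : forall b, exists f : V -> F^o, lin f /\ forall a,
    f (x a) = 0 /\ f (y a) = @dl K F b a /\ f (z a) = - @dl K F b a.
  move=> b; have [f [fa [fs fv]]] := Hun (F^o) (fun _ => 0) (@dl K F b) (fun a => - @dl K F b a)
    (fun a => etrans (congr1 (fun w => w + _) (add0r _)) (subrr _)).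
  by exists f; split.
have ex2 : forall b, exists f : V -> F^o, lin f /\ forall a,
    f (x a) = @dl K F b a /\ f (y a) = 0 /\ f (z a) = - @dl K F b a.
  move=> b; have [f [fa [fs fv]]] := Hun (F^o) (@dl K F b) (fun _ => 0) (fun a => - @dl K F b a)
    (fun a => etrans (congr1 (fun w => w + _) (addr0 _)) (subrr _)).
  by exists f; split.
have ex3 : forall b, exists f : V -> F^o, lin f /\ forall a,
    f (x a) = @dl K F b a /\ f (y a) = - @dl K F b a /\ f (z a) = 0.
  move=> b; have [f [fa [fs fv]]] := Hun (F^o) (@dl K F b) (fun a => - @dl K F b a) (fun _ => 0)
    (fun a => etrans (congr1 (fun w => w + _) (subrr _)) (addr0 _)).
  by exists f; split.
have [phx Hphx] := choice ex1.
have [phy Hphy] := choice ex2.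
have [phz Hphz] := choice ex3.
have M := main_bal Hrel Hspan Hphx Hphy Hphz.
split=> // _.
case: M => [h1 [h2 [h3 h4]]]; split=> //; split=> //; split.
  by move=> t s [_ [_ [_ [_ bt]]]] [_ [_ [_ [_ bs]]]]; apply: h3.
by move=> t s [_ [_ [_ [_ bt]]]] [_ [_ [_ [_ bs]]]]; apply: h4.
Qed.
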